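(* There exists a constant $c_1>0$ such that for all sufficiently large $n$ with $t\le c_1 n$, for all $k$ with $30\, x\log n\le k\le c_1 n$ and every tuple $(k_1,\dots,k_x)$ of integers with $t_i\le k_i\le a_i$ and $\sum_i k_i=k$, we have $a_{k_1,\dots,k_x}<\frac{1}{n^{3x}}$.
   Context: Random graph model: $V$ is a set of $n$ vertices, $B\subseteq V$ a target set with $|B|=t$, each $v\in V$ has a prescribed out-degree $d_v$ with $2\le d_{\min}\le d_v\le d_{\max}$ (constants), and for each $v$ independently its out-neighbour set is chosen uniformly among all $d_v$-element subsets of $V$. Let $d_1,\dots,d_x$ be the distinct out-degrees, $a_i$ the number of vertices of out-degree $d_i$, $t_i$ the number of vertices of $B$ of out-degree $d_i$; $\log$ is the natural logarithm. For $S\supseteq B$ containing $k_i$ vertices of out-degree $d_i$, $R(k_1,\dots,k_x)$ is the probability that every vertex of $S$ has a directed path to $B$ lying inside $S$. For $k=\sum_i k_i$ with $t_i\le k_i\le a_i$, $a_{k_1,\dots,k_x}=\left(\prod_{i=1}^x\binom{a_i-t_i}{k_i-t_i}\left(\binom{n-k}{d_i}/\binom{n}{d_i}\right)^{a_i-k_i}\right)R(k_1,\dots,k_x)$, with the factor $(\binom{n-k}{d_i}/\binom{n}{d_i})^{a_i-k_i}$ equal to $1$ when $a_i=k_i$. *)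

(* Defs.v *)
From Stdlib Require Import Reals.
From mathcomp Require Import all_boot.
Set Implicit Arguments. Unset Strict Implicit. Unset Printing Implicit Defensive.

(* Vertex set V = 'I_n.  An outcome of the random graph is a function
   f assigning to every vertex v its out-neighbour set f v. *)

Definition valid n (d : 'I_n -> nat) (f : {ffun 'I_n -> {set 'I_n}}) : bool :=
  [forall v, #|f v| == d v].

Definition edge_in n (S : {set 'I_n}) (f : {ffun 'I_n -> {set 'I_n}}) : rel 'I_n :=
  fun u w => [&& u \in S, w \in S & w \in f u].

Definition reaches_B n (S B : {set 'I_n}) (f : {ffun 'I_n -> {set 'I_n}}) : bool :=
  [forall v in S, [exists b in B, connect (edge_in S f) v b]].

(* Probability (each out-neighbourhood independent and uniform among the
   d_v-subsets = uniform measure on admissible outcomes) that every vertex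
   of S has a directed path to B inside S. *)
Definition Rprob n (d : 'I_n -> nat) (B S : {set 'I_n}) : R :=
  Rdiv (INR #|[set f | valid d f && reaches_B S B f]|)
       (INR #|[set f | valid d f]|).

Definition degs n (d : 'I_n -> nat) : seq nat := undup [seq d v | v <- enum 'I_n].

(* number of vertices of A of out-degree i  (a_i = cnt setT, t_i = cnt B) *)
Definition cnt n (A : {set 'I_n}) (d : 'I_n -> nat) (i : nat) : nat :=
  #|[set v in A | d v == i]|.

(* a_{k_1,...,k_x}, the tuple being given as kk : (degree value) -> nat,
   k = sum of the k_i, and Rv = R(k_1,...,k_x). *)
Definition aval n (d : 'I_n -> nat) (B : {set 'I_n}) (kk : nat -> nat) (k : nat)
  (Rv : R) : R :=
  Rmult
    (foldr Rmult R1
       (map (fun i =>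
          Rmult (INR 'C(cnt setT d i - cnt B d i, kk i - cnt B d i))
                (pow (Rdiv (INR 'C(n - k, i)) (INR 'C(n, i))) (cnt setT d i - kk i)))
        (degs d)))
    Rv.

(* Main.v *)
Require Import Defs.
From Stdlib Require Import Reals.
From mathcomp Require Import all_boot.
From Stdlib Require Import Lra Lia Psatz.
From mathcomp Require Import zify.
Set Implicit Arguments. Unset Strict Implicit.

Section Helpers.
Local Open Scope R_scope.
Definition prodR (l : seq nat) (f : nat -> R) : R := foldr Rmult R1 (map f l).

Lemma prodR_ge0 l f : (forall i, i \in l -> 0 <= f i) -> (0 <= prodR l f).
Proof.
elim: l => [|a l IH] H; rewrite /prodR /=; [lra|rewrite -/(prodR l f)].
apply: Rmult_le_pos; first by apply: H; rewrite inE eqxx.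
apply: IH => i Hi; apply: H; by rewrite inE Hi orbT.
Qed.

Lemma prodR_le l f g : (forall i, i \in l -> 0 <= f i <= g i) -> (prodR l f <= prodR l g).
Proof.
elim: l => [|a l IH] H; rewrite /prodR /=; [lra|rewrite -/(prodR l f) -/(prodR l g)].
have Ha := H a (mem_head _ _).
have H' : forall i, i \in l -> (0 <= f i <= g i) by move=> i Hi; apply: H; by rewrite inE Hi orbT.
apply: Rmult_le_compat; try lra; last exact: IH.
by apply: prodR_ge0 => i /H' ; lra.
Qed.

Lemma prodR_mul l f g : prodR l (fun i => f i * g i) = (prodR l f * prodR l g).
Proof. elim: l => [|a l IH] /=; rewrite /prodR /=; [ring| rewrite -/(prodR l _) IH /prodR; ring]. Qed.

Lemma prodR_pow l c b e g : prodR l (fun i => c ^ e i * b ^ g i)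
   = (c ^ (foldr addn 0%N (map e l)) * b ^ (foldr addn 0%N (map g l))).
Proof.
elim: l => [|a l IH] /=; rewrite /prodR /=; first ring.
rewrite -/(prodR l _) IH -!plusE !pow_add; ring.
Qed.

Lemma prodR_INR l F : INR (\prod_(i <- l) F i) = prodR l (fun i => INR (F i)).
Proof.
elim: l => [|a l IH]; first by rewrite big_nil.
by rewrite big_cons -multE mult_INR IH.
Qed.

Lemma binom_term (N m : nat) (a b : R) : (0 <= a) -> (0 <= b) ->
  (INR 'C(N, m) * a ^ m * b ^ (N - m)%N <= (a + b) ^ N).
Proof.
move=> Ha Hb; elim: N m => [|N IH] [|m].
- rewrite bin0 /=; lra.
- rewrite bin0n /=; lra.
- have h := pow_incr b (a+b) N.+1 ltac:(lra).
  rewrite bin0 subn0 /= in h *; lra.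
- rewrite binS plus_INR subSS.
  have H1 := IH m.
  have E : ((a + b) ^ N.+1 = a * (a+b)^N + b * (a+b)^N) by rewrite /=; ring.
  rewrite E.
  have H2 : (INR 'C(N, m.+1) * a ^ m.+1 * b ^ (N - m)%N <= b * (a + b) ^ N).
    case: (ltnP m N) => hmN.
    + have -> : (N - m = (N - m.+1).+1)%N by lia.
      have := IH m.+1.
      have := pow_le b (N - m.+1)%N Hb.
      move=> ? ?; rewrite [(b ^ ((N - m.+1).+1)%N)]/=.
      have -> : (INR 'C(N, m.+1) * a ^ m.+1 * (b * b ^ (N - m.+1)%N) = b * (INR 'C(N, m.+1) * a ^ m.+1 * b ^ (N - m.+1)%N)) by ring.
      apply: Rmult_le_compat_l => //.
    + rewrite bin_small; last lia.
      rewrite /= !Rmult_0_l; apply: Rmult_le_pos => //; apply: pow_le; lra.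
  have H3 : (INR 'C(N, m) * a ^ m.+1 * b ^ (N - m)%N = a * (INR 'C(N, m) * a ^ m * b ^ (N - m)%N)) by rewrite /=; ring.
  have : (a * (INR 'C(N, m) * a ^ m * b ^ (N - m)%N) <= a * (a+b)^N) by apply: Rmult_le_compat_l.
  lra.
Qed.

End Helpers.

Section Helpers2.
Local Open Scope R_scope.
Lemma prodR_ext l f g : (forall i, i \in l -> f i = g i) -> prodR l f = prodR l g.
Proof.
elim: l => [|a l IH] H //; rewrite /prodR /= -/(prodR l f) -/(prodR l g).
rewrite H ?mem_head // IH // => i Hi; apply: H; by rewrite inE Hi orbT.
Qed.
Lemma prodR_gt0 l f : (forall i, i \in l -> 0 < f i) -> 0 < prodR l f.
Proof.
elim: l => [|a l IH] H; rewrite /prodR /=; [lra|rewrite -/(prodR l f)].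
apply: Rmult_lt_0_compat; first by apply: H; rewrite inE eqxx.
apply: IH => i Hi; apply: H; by rewrite inE Hi orbT.
Qed.
End Helpers2.

Lemma bin_ratio n k i : k <= n -> 'C(n - k, i) * n ^ i <= 'C(n, i) * (n - k) ^ i.
Proof.
move=> kn; elim: i => [|i IH]; first by rewrite !bin0 !expn0.
rewrite -(@leq_pmul2l i.+1) //.
rewrite mulnA mul_bin_left [X in _ <= X]mulnA mul_bin_left.
rewrite !expnS.
have h : (n - k - i) * n <= (n - i) * (n - k) by nia.
have -> : (n - k - i) * 'C(n - k, i) * (n * n ^ i) = ((n - k - i) * n) * ('C(n - k, i) * n ^ i) by lia.
have -> : (n - i) * 'C(n, i) * ((n - k) * (n - k) ^ i) = ((n - i) * (n - k)) * ('C(n, i) * (n - k) ^ i) by lia.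
exact: leq_mul.
Qed.

Section Part.
Variable n : nat.
Variable d : 'I_n -> nat.

Lemma part_big (R : Type) (idx : R) (op : Monoid.com_law idx) (A : {set 'I_n}) (l : seq nat) (G : 'I_n -> R) :
  uniq l -> (forall v, d v \in l) ->
  \big[op/idx]_(v in A) G v = \big[op/idx]_(i <- l) \big[op/idx]_(v in A | d v == i) G v.
Proof.
move=> ul dl.
rewrite (eq_bigr (fun v => \big[op/idx]_(i <- l | d v == i) G v)); last first.
  move=> v _; rewrite -big_filter.
  have -> : [seq i <- l | d v == i] = [:: d v].
    rewrite (eq_filter (a2 := pred1 (d v))); last by move=> j /=; rewrite eq_sym.
    exact: filter_pred1_uniq.
  by rewrite big_seq1.
exact: (exchange_big_dep predT).
Qed.

Lemma part_prod (A : {set 'I_n}) (l : seq nat) (F : nat -> nat) :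
  uniq l -> (forall v, d v \in l) ->
  \prod_(v in A) F (d v) = \prod_(i <- l) F i ^ #|[set v in A | d v == i]|.
Proof.
move=> ul dl; rewrite (@part_big _ _ _ A l _ ul dl); apply: eq_bigr => i _.
rewrite (eq_bigr (fun _ => F i)); last by move=> v /andP[_ /eqP ->].
rewrite -prod_nat_const; apply: eq_bigl => v; by rewrite inE.
Qed.

Lemma part_sum (A : {set 'I_n}) (l : seq nat) :
  uniq l -> (forall v, d v \in l) ->
  \sum_(i <- l) #|[set v in A | d v == i]| = #|A|.
Proof.
move=> ul dl; rewrite -sum1_card (@part_big _ _ _ A l _ ul dl); apply: eq_bigr => i _.
rewrite sum1_card; apply: eq_card => v; by rewrite inE.
Qed.
End Part.

Lemma card_fam n (F : 'I_n -> {set {set 'I_n}}) :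
  #|[set f : {ffun 'I_n -> {set 'I_n}} | [forall v, f v \in F v]]| = \prod_(v : 'I_n) #|F v|.
Proof.
have := card_family (fun v : 'I_n => mem (F v)).
rewrite foldrE big_map -big_enum /=.
move=> <-.
apply: eq_card => f; rewrite inE.
by [].
Qed.

Section Cards.
Variable n : nat.
Variable d : 'I_n -> nat.

Lemma card_valid : #|[set f | valid d f]| = \prod_(v : 'I_n) 'C(n, d v).
Proof.
rewrite (eq_bigr (fun v => #|[set X : {set 'I_n} | #|X| == d v]|)); last by move=> v _; rewrite card_draws card_ord.
rewrite -card_fam.
apply: eq_card => f; rewrite !inE /valid; apply: eq_forallb => v; by rewrite inE.
Qed.

Variables B S : {set 'I_n}.

Lemma card_good : B \subset S ->
  #|[set f | valid d f && reaches_B S B f]| <=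
  \prod_(v : 'I_n) (if v \in S :\: B then 'C(n, d v) - 'C(n - #|S|, d v) else 'C(n, d v)).
Proof.
move=> BS.
pose K v := [set X : {set 'I_n} | X \subset ~: S & #|X| == d v].
pose Fd v := [set X : {set 'I_n} | #|X| == d v].
pose Fm v := if v \in S :\: B then Fd v :\: K v else Fd v.
have cFm v : #|Fm v| = (if v \in S :\: B then 'C(n, d v) - 'C(n - #|S|, d v) else 'C(n, d v)).
  rewrite /Fm; case: ifP => _; last by rewrite card_draws card_ord.
  rewrite cardsD card_draws card_ord.
  have -> : Fd v :&: K v = K v.
    apply/setIidPr/subsetP => X; rewrite !inE => /andP[_ ->] //.
  rewrite cards_draws.
  have h := cardsC S; rewrite card_ord in h.
  have h' : #|~: S| = n - #|S| by lia.
  by rewrite h'.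
rewrite (eq_bigr (fun v => #|Fm v|)); last by move=> v _; rewrite cFm.
rewrite -card_fam; apply: subset_leq_card; apply/subsetP => f; rewrite !inE.
move=> /andP[/forallP val /forall_inP reach]; apply/forallP => v.
rewrite /Fm; case: ifP => vSB; last by rewrite inE; exact: val.
rewrite !inE val andbT.
apply/negP => /andP[/subsetP sub _].
move: vSB; rewrite inE => /andP[vB vS].
have /existsP[b /andP[bB /connectP[p pth lst]]] := reach v vS.
case: p pth lst => [|w p] /=.
  by move=> _ bv; move: vB; rewrite -bv bB.
move=> /andP[e _] _; move: e; rewrite /edge_in => /and3P[_ wS wf].
by have := sub w wf; rewrite inE wS.
Qed.
End Cards.

Lemma INR_muln a b : INR (a * b) = Rmult (INR a) (INR b).
Proof. by rewrite -multE mult_INR. Qed.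
Lemma INR_expn a b : INR (a ^ b) = pow (INR a) b.
Proof. elim: b => [|b IH]; first by rewrite expn0. by rewrite expnS INR_muln IH. Qed.
Lemma INR_subn a b : b <= a -> INR (a - b) = Rminus (INR a) (INR b).
Proof. move=> h; rewrite -minusE minus_INR //; exact/leP. Qed.
Lemma INR_addn a b : INR (a + b) = Rplus (INR a) (INR b).
Proof. by rewrite -plusE plus_INR. Qed.

Section R4.
Local Open Scope R_scope.

Lemma key_class (N m : nat) (q Q : R) : (m <= N)%N -> 0 <= q -> q <= Q -> Q <= 1 ->
  INR 'C(N, m) * q ^ (N - m)%N * (1 - q) ^ m <= 2 ^ m * ((1 + Q) / 2) ^ N.
Proof.
move=> mN q0 qQ Q1.
have h := @binom_term N m ((1 - q) / 2) q ltac:(lra) q0.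
have e : ((1 - q) / 2) ^ m = (1 - q) ^ m * / 2 ^ m.
  by rewrite /Rdiv Rpow_mult_distr pow_inv.
rewrite e in h.
have p2 : 0 < 2 ^ m by apply: pow_lt; lra.
have h2 : ((1 - q) / 2 + q) ^ N <= ((1 + Q) / 2) ^ N by apply: pow_incr; lra.
have h3 : INR 'C(N, m) * q ^ (N - m)%N * (1 - q) ^ m = 2 ^ m * (INR 'C(N, m) * ((1 - q) ^ m * / 2 ^ m) * q ^ (N - m)%N).
  field; lra.
rewrite h3; apply: Rmult_le_compat_l; lra.
Qed.

Lemma ln2_lt : ln 2 < 0.8.
Proof.
have h := exp_ineq1 0.2 ltac:(lra).
have e : exp 0.8 = exp 0.2 * exp 0.2 * exp 0.2 * exp 0.2.
  by rewrite -!exp_plus; f_equal; lra.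
have h2 : 2 < exp 0.8.
  rewrite e.
  have : 1.2 * 1.2 * 1.2 * 1.2 <= exp 0.2 * exp 0.2 * exp 0.2 * exp 0.2.
    repeat apply: Rmult_le_compat; lra.
  lra.
have := ln_increasing 2 (exp 0.8) ltac:(lra) h2; rewrite ln_exp; lra.
Qed.

Lemma q_le (n k i : nat) : (k <= n)%N -> (2 <= i)%N -> (i <= n)%N ->
  0 <= INR 'C(n - k, i) / INR 'C(n, i) <= ((INR n - INR k) / INR n) ^ 2.
Proof.
move=> kn i2 iN.
have Vpos : 0 < INR 'C(n, i) by apply: lt_0_INR; apply/ltP; rewrite bin_gt0.
have npos : 0 < INR n by apply: lt_0_INR; apply/ltP; lia.
split; first by apply: Rmult_le_pos; [apply: pos_INR | left; apply: Rinv_0_lt_compat].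
have h := bin_ratio i kn.
have h' : INR 'C(n - k, i) * INR n ^ i <= INR 'C(n, i) * (INR n - INR k) ^ i.
  rewrite -INR_subn // -!INR_expn -!INR_muln; apply: le_INR; apply/leP; exact: h.
have y0 : 0 <= (INR n - INR k) / INR n.
  apply: Rmult_le_pos; last by left; apply: Rinv_0_lt_compat.
  have := le_INR k n (elimT leP kn); lra.
have y1 : (INR n - INR k) / INR n <= 1.
  apply: (Rmult_le_reg_r (INR n)) => //; rewrite /Rdiv Rmult_assoc Rinv_l; last lra.
  have := pos_INR k; lra.
have hi : ((INR n - INR k) / INR n) ^ i <= ((INR n - INR k) / INR n) ^ 2.
  have -> : i = (2 + (i - 2))%N by lia.
  rewrite pow_add.
  have := pow_le _ 2 y0.
  have : ((INR n - INR k) / INR n) ^ (i - 2)%N <= 1 by rewrite -(pow1 (i - 2)); apply: pow_incr; lra.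
  have := pow_le _ (i - 2)%N y0.
  nra.
apply: Rle_trans hi.
have e : ((INR n - INR k) / INR n) ^ i = (INR n - INR k) ^ i / INR n ^ i.
  by rewrite /Rdiv Rpow_mult_distr pow_inv.
rewrite e.
have pni : 0 < INR n ^ i by apply: pow_lt.
apply: (Rmult_le_reg_r (INR 'C(n, i) * INR n ^ i)); first nra.
have -> : INR 'C(n - k, i) / INR 'C(n, i) * (INR 'C(n, i) * INR n ^ i) = INR 'C(n - k, i) * INR n ^ i by field; lra.
have -> : (INR n - INR k) ^ i / INR n ^ i * (INR 'C(n, i) * INR n ^ i) = INR 'C(n, i) * (INR n - INR k) ^ i by field; lra.
exact: h'.
Qed.
End R4.

Section R5.
Local Open Scope R_scope.
Lemma final_num (n k tB x M NN : nat) : (2 <= n)%N -> (1 <= x)%N ->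
  INR tB <= INR n / 100 -> INR k <= INR n / 100 ->
  30 * INR x * ln (INR n) <= INR k -> (M <= k)%N -> (NN + tB = n)%N ->
  2 ^ M * ((1 + ((INR n - INR k) / INR n) ^ 2) / 2) ^ NN < / INR n ^ (3 * x)%N.
Proof.
move=> n2 x1 htB hk hk30 Mk eN.
have npos : 2 <= INR n by have := le_INR 2 n (elimT leP n2); rewrite /=; lra.
have lnn : 0 < ln (INR n) by rewrite -ln_1; apply: ln_increasing; lra.
have X1 : 1 <= INR x by have := le_INR 1 x (elimT leP x1); rewrite /=; lra.
have k0 : 0 <= INR k by apply: pos_INR.
have tB0 : 0 <= INR tB by apply: pos_INR.
have MK : INR M <= INR k by apply: le_INR; apply/leP.
have M0 : 0 <= INR M by apply: pos_INR.
have eNN : INR NN = INR n - INR tB by rewrite -eN INR_addn; ring.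
set u := INR k / INR n.
have ue : INR k = u * INR n by rewrite /u; field; lra.
have u0 : 0 <= u by rewrite /u; apply: Rmult_le_pos => //; left; apply: Rinv_0_lt_compat; lra.
have u1 : u <= 1/100 by apply: (Rmult_le_reg_r (INR n)); lra.
have eQ : (INR n - INR k) / INR n = 1 - u by rewrite /u; field; lra.
rewrite eQ.
set r := (1 + (1 - u) ^ 2) / 2.
have r0 : 0 < r by rewrite /r; have := pow2_ge_0 (1 - u); lra.
have L0 : 0 < 2 ^ M * r ^ NN by apply: Rmult_lt_0_compat; apply: pow_lt; lra.
have T0 : 0 < INR n ^ (3 * x)%N by apply: pow_lt; lra.
apply: ln_lt_inv => //; first by apply: Rinv_0_lt_compat.
rewrite ln_Rinv // ln_mult; try (apply: pow_lt; lra).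
rewrite !ln_pow; try lra.
rewrite INR_muln eNN.
have lr : ln r <= r - 1 by have := exp_ineq1_le (ln r); rewrite exp_ln //; lra.
have l2 := ln2_lt.
have l20 : 0 < ln 2 by have := ln_lt_2; lra.
have e3 : INR 3 = 3 by rewrite /=; ring.
rewrite e3.
have hNN : 0 <= INR n - INR tB by lra.
have h1 : (INR n - INR tB) * ln r <= (INR n - INR tB) * (r - 1) by apply: Rmult_le_compat_l.
have h2 : INR M * ln 2 <= INR k * 0.8 by nra.
have h3 : (INR n - INR tB) * (r - 1) <= - 0.985 * INR k.
  rewrite /r ue.
  have : (INR n - INR tB) >= 0.99 * INR n by lra.
  nra.
have h4 : 0 < INR x * ln (INR n) by nra.
nra.
Qed.
End R5.

Unset Implicit Arguments.

Lemma cnt_split n (d : 'I_n -> nat) (A C : {set 'I_n}) i :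
  cnt A d i = cnt (A :&: C) d i + cnt (A :\: C) d i.
Proof.
rewrite /cnt -(cardsID C [set v in A | d v == i]).
have e1 : [set v in A | d v == i] :&: C = [set v in A :&: C | d v == i].
  by apply/setP => v; rewrite !inE; case: (v \in C); case: (v \in A); case: (d v == i).
have e2 : [set v in A | d v == i] :\: C = [set v in A :\: C | d v == i].
  by apply/setP => v; rewrite !inE; case: (v \in C); case: (v \in A); case: (d v == i).
by rewrite e1 e2.
Qed.

Theorem lemma9 :
  forall dmin dmax : nat, 2 <= dmin <= dmax ->
  exists c1 : R, Rlt 0 c1 /\
  exists N : nat, forall n : nat, N <= n ->
  forall (d : 'I_n -> nat) (B : {set 'I_n}),
    (forall v, dmin <= d v <= dmax) ->
    Rle (INR #|B|) (Rmult c1 (INR n)) ->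
    forall kk : nat -> nat,
      (forall i, i \in degs d -> cnt B d i <= kk i <= cnt setT d i) ->
      let k := foldr addn 0 [seq kk i | i <- degs d] in
      Rle (Rmult (Rmult (INR 30) (INR (size (degs d)))) (ln (INR n))) (INR k) ->
      Rle (INR k) (Rmult c1 (INR n)) ->
      forall S : {set 'I_n}, B \subset S ->
        (forall i, i \in degs d -> cnt S d i = kk i) ->
        Rlt (aval d B kk k (Rprob d B S)) (Rinv (pow (INR n) (3 * size (degs d)))).
Proof.
move=> dmin dmax /andP[d2 dd].
exists (Rdiv 1 100); split; first lra.
exists (dmax + 2) => n Hn d B Hd HB kk Hkk k Hk1 Hk2 S BS HS.
have ul : uniq (degs d) := undup_uniq _.
have dl : forall v, d v \in degs d.
  by move=> v; rewrite mem_undup; apply: map_f; rewrite mem_enum.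
have lr : forall i, i \in degs d -> dmin <= i <= dmax.
  by move=> i; rewrite mem_undup => /mapP[v _ ->]; exact: Hd.
have n2 : 2 <= n by lia.
have x1 : 0 < size (degs d).
  have n0 : 0 < n by lia.
  have := dl (Ordinal n0); by case: (degs d).
have kS : k = #|S|.
  rewrite /k foldrE big_map -(@part_sum n d S (degs d) ul dl).
  apply: eq_big_seq => i hi; by rewrite -HS.
have sumA : \sum_(i <- degs d) cnt setT d i = n.
  by rewrite /cnt (@part_sum n d setT (degs d) ul dl) cardsT card_ord.
have sumT : \sum_(i <- degs d) cnt B d i = #|B|.
  by rewrite /cnt (@part_sum n d B (degs d) ul dl).
have dS : forall i, cnt S d i = cnt B d i + cnt (S :\: B) d i.
  move=> i; rewrite (@cnt_split _ d S B i); congr (_ + _).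
  by rewrite (setIidPr BS).
have dT : forall i, cnt setT d i = cnt (S :\: B) d i + cnt (~: (S :\: B)) d i.
  by move=> i; rewrite (@cnt_split _ d setT (S :\: B) i) setTI setTD.
have kn : k <= n by rewrite kS; have := max_card S; rewrite card_ord.
have mS : forall i, i \in degs d -> cnt (S :\: B) d i = kk i - cnt B d i.
  by move=> i hi; have := dS i; rewrite HS //; lia.
have cC : forall i, i \in degs d -> cnt (~: (S :\: B)) d i = cnt setT d i - (kk i - cnt B d i).
  by move=> i hi; have := dT i; rewrite mS //; lia.
have cV : #|[set f | valid d f]| = \prod_(i <- degs d) 'C(n, i) ^ cnt setT d i.
  rewrite card_valid.
  rewrite (eq_bigl (fun v => v \in [set: 'I_n])); last by move=> v; rewrite inE.
  exact: (@part_prod n d setT (degs d) (fun i => 'C(n, i)) ul dl).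
have cG : #|[set f | valid d f && reaches_B S B f]| <=
   (\prod_(i <- degs d) ('C(n, i) - 'C(n - k, i)) ^ cnt (S :\: B) d i) *
   \prod_(i <- degs d) 'C(n, i) ^ cnt (~: (S :\: B)) d i.
  apply: leq_trans (@card_good n d B S BS) _.
  rewrite (bigID (fun v => v \in S :\: B)) /= -kS.
  apply: leq_mul; rewrite leq_eqVlt; apply/orP; left; apply/eqP.
  - rewrite (eq_bigr (fun v => ('C(n, d v) - 'C(n - k, d v)))); last by move=> v ->.
    exact: (@part_prod n d (S :\: B) (degs d) (fun i => 'C(n, i) - 'C(n - k, i)) ul dl).
  - rewrite (eq_bigr (fun v => 'C(n, d v))); last by move=> v /negbTE ->.
    rewrite (eq_bigl (fun v => v \in ~: (S :\: B))); last by move=> v /=; rewrite !inE.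
    exact: (@part_prod n d (~: (S :\: B)) (degs d) (fun i => 'C(n, i)) ul dl).
have Vpos : forall i, i \in degs d -> Rlt 0 (INR 'C(n, i)).
  move=> i hi; apply: lt_0_INR; apply/ltP; rewrite bin_gt0; have := lr i hi; lia.
have mle : forall i, i \in degs d -> kk i - cnt B d i <= cnt setT d i.
  move=> i hi; have := Hkk i hi; lia.
Local Open Scope R_scope.
pose qR i := INR 'C(n - k, i) / INR 'C(n, i).
pose Q := ((INR n - INR k) / INR n) ^ 2.
pose m i := (kk i - cnt B d i)%N.
have qb : forall i, i \in degs d -> 0 <= qR i <= Q.
  move=> i hi; apply: q_le => //; have := lr i hi; lia.
have Q1 : Q <= 1.
  have np : 0 < INR n by apply: lt_0_INR; apply/ltP; lia.
  have kn' := le_INR _ _ (elimT leP kn).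
  have y0 : 0 <= (INR n - INR k) / INR n.
    apply: Rmult_le_pos; [lra | left; apply: Rinv_0_lt_compat; lra].
  have y1 : (INR n - INR k) / INR n <= 1.
    apply: (Rmult_le_reg_r (INR n)) => //; rewrite /Rdiv Rmult_assoc Rinv_l; last lra.
    have := pos_INR k; lra.
  rewrite /Q; nra.
have RB : Rprob d B S <= prodR (degs d) (fun i => (1 - qR i) ^ m i).
  rewrite /Rprob cV.
  have G := le_INR _ _ (elimT leP cG).
  rewrite INR_muln !prodR_INR in G.
  rewrite prodR_INR.
  pose Pm := prodR (degs d) (fun i => INR 'C(n, i) ^ m i).
  pose Pc := prodR (degs d) (fun i => INR 'C(n, i) ^ (cnt setT d i - m i)%N).
  pose Pp := prodR (degs d) (fun i => (1 - qR i) ^ m i).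
  have e1 : prodR (degs d) (fun i => INR (('C(n, i) - 'C(n - k, i)) ^ cnt (S :\: B) d i)) = Pp * Pm.
    rewrite /Pp /Pm -prodR_mul; apply: prodR_ext => i hi.
    rewrite INR_expn INR_subn; last by apply: leq_bin2l; apply: leq_subr.
    rewrite mS // -Rpow_mult_distr; f_equal; rewrite /qR; field.
    have := Vpos i hi; lra.
  have e2 : prodR (degs d) (fun i => INR ('C(n, i) ^ cnt (~: (S :\: B)) d i)) = Pc.
    rewrite /Pc; apply: prodR_ext => i hi; by rewrite INR_expn cC.
  have e3 : prodR (degs d) (fun i => INR ('C(n, i) ^ cnt setT d i)) = Pm * Pc.
    rewrite /Pm /Pc -prodR_mul; apply: prodR_ext => i hi.
    rewrite INR_expn -pow_add; f_equal; rewrite /m; have := mle i hi; lia.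
  rewrite e1 e2 in G; rewrite e3.
  have Pm0 : 0 < Pm by apply: prodR_gt0 => i hi; apply: pow_lt; apply: Vpos.
  have Pc0 : 0 < Pc by apply: prodR_gt0 => i hi; apply: pow_lt; apply: Vpos.
  have PP : 0 < Pm * Pc by apply: Rmult_lt_0_compat.
  apply: (Rmult_le_reg_r (Pm * Pc)) => //.
  rewrite /Rdiv Rmult_assoc Rinv_l; last lra.
  rewrite -/Pp Rmult_1_r.
  have -> : Pp * (Pm * Pc) = Pp * Pm * Pc by ring.
  exact: G.
pose T i := INR 'C(cnt setT d i - cnt B d i, kk i - cnt B d i) *
   ((INR 'C(n - k, i) / INR 'C(n, i)) ^ (cnt setT d i - kk i)%N).
have -> : aval d B kk k (Rprob d B S) = prodR (degs d) T * Rprob d B S by [].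
have T0 : forall i, i \in degs d -> 0 <= T i.
  move=> i hi; apply: Rmult_le_pos; first by apply: pos_INR.
  apply: pow_le; have := qb i hi; rewrite /qR; lra.
pose r := (1 + Q) / 2.
pose M := foldr addn 0%N (map m (degs d)).
pose NN := foldr addn 0%N (map (fun i => cnt setT d i - cnt B d i)%N (degs d)).
have s1 : prodR (degs d) T * Rprob d B S <= prodR (degs d) (fun i => T i * (1 - qR i) ^ m i).
  rewrite prodR_mul; apply: Rmult_le_compat_l => //; exact: prodR_ge0.
have s3 : prodR (degs d) (fun i => T i * (1 - qR i) ^ m i) <=
          prodR (degs d) (fun i => 2 ^ m i * r ^ (cnt setT d i - cnt B d i)%N).
  apply: prodR_le => i hi.
  have qi := qb i hi.
  have hk := Hkk i hi.
  split.
    apply: Rmult_le_pos; first exact: T0.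
    apply: pow_le; lra.
  rewrite /T /r /m.
  have -> : (cnt setT d i - kk i = (cnt setT d i - cnt B d i) - (kk i - cnt B d i))%N by lia.
  apply: key_class; [lia | rewrite -/(qR i); lra | rewrite -/(qR i); lra | exact: Q1].
have s4 : prodR (degs d) (fun i => 2 ^ m i * r ^ (cnt setT d i - cnt B d i)%N) = 2 ^ M * r ^ NN.
  by rewrite prodR_pow.
have MK : (M <= k)%N.
  rewrite /M /k !foldrE !big_map; apply: leq_sum => j _; apply: leq_subr.
have NNe : (NN + #|B| = n)%N.
  rewrite /NN foldrE big_map -sumT; apply: (etrans _ sumA); rewrite -big_split /=.
  apply: eq_big_seq => j hj; have := Hkk j hj; lia.
have e30 : INR 30 = 30 by rewrite INR_IZR_INZ.
rewrite e30 in Hk1.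
have s5 := @final_num n k #|B| (size (degs d)) M NN n2 x1 ltac:(lra) ltac:(lra) Hk1 MK NNe.
apply: Rle_lt_trans s1 _.
apply: Rle_lt_trans s3 _.
rewrite s4; exact: s5.
Qed.
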